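(* Let $\mathcal A,\mathcal B>0$, $\alpha,\beta\in(0,1)$, $h,\tau>0$, and for a real number $\theta$ let $s=\sin^2(\theta h/2)$, $$\widetilde{\mathcal Q}=\Big[1-\tfrac{4}{35}s^3\Big]+4g_0^{(\alpha,\beta)}s\Big[1+\tfrac13 s+\tfrac{8}{45}s^2\Big],\qquad \widetilde{\mathcal P}=\Big[1-\tfrac{4}{35}s^3\Big]-4g_1^{(\alpha,\beta)}s\Big[1+\tfrac13 s+\tfrac{8}{45}s^2\Big].$$ Then $|\widetilde{\mathcal P}/\widetilde{\mathcal Q}|\le1$ for every real $\theta$.
   Context: $\varpi_\ell^{(\sigma)}=(-1)^\ell\binom{\sigma}{\ell}$, $g_0^{(\sigma)}=\frac{1+\sigma}{2}\varpi_0^{(\sigma)}$, $g_\ell^{(\sigma)}=\frac{1+\sigma}{2}\varpi_\ell^{(\sigma)}+\frac{1-\sigma}{2}\varpi_{\ell-1}^{(\sigma)}$ ($\ell\ge1$); $\mu_\alpha=\tau^\alpha\mathcal A/h^2$, $\mu_\beta=\tau^\beta\mathcal B/h^2$, $g_\ell^{(\alpha,\beta)}=\mu_\alpha g_\ell^{(1-\alpha)}+\mu_\beta g_\ell^{(1-\beta)}$. *)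

(* Defs.v *)
From Stdlib Require Import Reals Lra Arith.
Open Scope R_scope.

Fixpoint falling (sigma : R) (l : nat) : R :=
  match l with
  | O => 1
  | S k => falling sigma k * (sigma - INR k)
  end.

Definition gbinom (sigma : R) (l : nat) : R := falling sigma l / INR (Factorial.fact l).

Definition varpi (sigma : R) (l : nat) : R := (-1) ^ l * gbinom sigma l.

Definition gcoef (sigma : R) (l : nat) : R :=
  match l with
  | O => (1 + sigma) / 2 * varpi sigma 0
  | S k => (1 + sigma) / 2 * varpi sigma l + (1 - sigma) / 2 * varpi sigma k
  end.

(* mu_alpha = tau^alpha A / h^2, real exponent via Rpower (tau > 0) *)
Definition mu (tau gamma C h : R) : R := Rpower tau gamma * C / h ^ 2.

Definition gab (A B alpha beta h tau : R) (l : nat) : R :=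
  mu tau alpha A h * gcoef (1 - alpha) l + mu tau beta B h * gcoef (1 - beta) l.

Definition Qt (A B alpha beta h tau theta : R) : R :=
  let s := (sin (theta * h / 2)) ^ 2 in
  (1 - 4 / 35 * s ^ 3) + 4 * gab A B alpha beta h tau 0 * s * (1 + 1 / 3 * s + 8 / 45 * s ^ 2).

Definition Pt (A B alpha beta h tau theta : R) : R :=
  let s := (sin (theta * h / 2)) ^ 2 in
  (1 - 4 / 35 * s ^ 3) - 4 * gab A B alpha beta h tau 1 * s * (1 + 1 / 3 * s + 8 / 45 * s ^ 2).

(* Main.v *)
Require Import Defs.
From Stdlib Require Import Reals Lra.
Open Scope R_scope.

Lemma g0E s : gcoef s 0 = (1 + s) / 2.
Proof. unfold gcoef, varpi, gbinom; simpl. field. Qed.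

Lemma g1E s : gcoef s 1 = (1 + s) / 2 * (- s) + (1 - s) / 2.
Proof. unfold gcoef, varpi, gbinom; simpl. field. Qed.

Lemma mu_pos t g C h : 0 < t -> 0 < C -> 0 < h -> 0 < mu t g C h.
Proof.
  intros Ht HC Hh. unfold mu. unfold Rdiv.
  apply Rmult_lt_0_compat. apply Rmult_lt_0_compat; [apply exp_pos|lra].
  apply Rinv_0_lt_compat. apply pow_lt; lra.
Qed.

Theorem lemma8 (A B alpha beta h tau : R)
  (hA : 0 < A) (hB : 0 < B)
  (ha0 : 0 < alpha) (ha1 : alpha < 1) (hb0 : 0 < beta) (hb1 : beta < 1)
  (hh : 0 < h) (htau : 0 < tau) :
  forall theta : R,
    Rabs (Pt A B alpha beta h tau theta / Qt A B alpha beta h tau theta) <= 1.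
Proof.
  intro theta. unfold Pt, Qt, gab. rewrite !g0E, !g1E.
  set (s := sin (theta * h / 2) ^ 2).
  set (m1 := mu tau alpha A h). set (m2 := mu tau beta B h).
  assert (Hm1 : 0 < m1) by (apply mu_pos; lra).
  assert (Hm2 : 0 < m2) by (apply mu_pos; lra).
  assert (Hs : 0 <= s <= 1).
  { unfold s. pose proof (sin_bound (theta * h / 2)) as Hsb. pose proof (sin2 (theta*h/2)). pose proof (pow2_ge_0 (cos (theta*h/2))). pose proof (pow2_ge_0 (sin (theta*h/2))). unfold Rsqr in *. simpl in *. nra. }
  set (a := 1 - 4 / 35 * s ^ 3).
  set (b := 4 * s * (1 + 1 / 3 * s + 8 / 45 * s ^ 2)).
  assert (Ha : 0 < a).
  { unfold a. assert (s ^ 3 <= 1). { simpl. assert (s*s <= 1) by nra. nra. } lra. }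
  assert (Hb : 0 <= b).
  { unfold b. assert (0 <= s^2) by (simpl; nra). nra. }
  set (G0 := m1 * ((1 + (1 - alpha)) / 2) + m2 * ((1 + (1 - beta)) / 2)).
  set (G1 := m1 * ((1 + (1 - alpha)) / 2 * - (1 - alpha) + (1 - (1 - alpha)) / 2)
           + m2 * ((1 + (1 - beta)) / 2 * - (1 - beta) + (1 - (1 - beta)) / 2)).
  assert (HQ : a + 4 * G0 * s * (1 + 1 / 3 * s + 8 / 45 * s ^ 2) = a + G0 * b) by (unfold b; ring).
  assert (HP : a - 4 * G1 * s * (1 + 1 / 3 * s + 8 / 45 * s ^ 2) = a - G1 * b) by (unfold b; ring).
  fold G0 G1. rewrite HQ, HP.
  assert (HG0 : 0 <= G0) by (unfold G0; nra).
  assert (HS : 0 <= G0 + G1).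
  { unfold G0, G1.
    assert (0 <= (1 + (1 - alpha)) / 2 + ((1 + (1 - alpha)) / 2 * - (1 - alpha) + (1 - (1 - alpha)) / 2)) by nra.
    assert (0 <= (1 + (1 - beta)) / 2 + ((1 + (1 - beta)) / 2 * - (1 - beta) + (1 - (1 - beta)) / 2)) by nra.
    nra. }
  assert (HD : 0 <= G0 - G1).
  { unfold G0, G1.
    assert (0 <= (1 + (1 - alpha)) / 2 - ((1 + (1 - alpha)) / 2 * - (1 - alpha) + (1 - (1 - alpha)) / 2)) by nra.
    assert (0 <= (1 + (1 - beta)) / 2 - ((1 + (1 - beta)) / 2 * - (1 - beta) + (1 - (1 - beta)) / 2)) by nra.
    nra. }
  assert (Q0 : 0 < a + G0 * b) by nra.
  unfold Rdiv; rewrite Rabs_mult, Rabs_inv. rewrite (Rabs_right (a + G0 * b)) by lra.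
  apply (Rmult_le_reg_r (a + G0 * b)); [lra|].
  rewrite Rmult_assoc, Rinv_l by lra. rewrite Rmult_1_r, Rmult_1_l.
  apply Rabs_le. split; nra.
Qed.
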